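(* Let $A_0,A_1,\ldots,A_n\in M_d(\mathbb C)$ and $X_{\mathrm{free}}=A_0\otimes1+\sum_{i=1}^nA_i\otimes s_i$. For every integer $p\ge2$, \[ \varphi[X_{\mathrm{free}}^p]=\varphi[X_{\mathrm{free}}^{p-1}]\,A_0+\sum_{i=1}^n\sum_{k=0}^{p-2}\varphi[X_{\mathrm{free}}^k]\,A_i\,\varphi[X_{\mathrm{free}}^{p-2-k}]\,A_i . \] Moreover, for every $B\in M_d(\mathbb C)$ and integers $p,q\ge1$, \begin{align*} \varphi[X_{\mathrm{free}}^p(B\otimes1)X_{\mathrm{free}}^q]&=\varphi[X_{\mathrm{free}}^p(B\otimes1)X_{\mathrm{free}}^{q-1}]\,A_0+\sum_{i=1}^n\sum_{k=0}^{p-1}\varphi[X_{\mathrm{free}}^k]\,A_i\,\varphi[X_{\mathrm{free}}^{p-1-k}(B\otimes1)X_{\mathrm{free}}^{q-1}]\,A_i\\ &\quad+\mathbb 1_{\{q\ge2\}}\sum_{i=1}^n\sum_{k=0}^{q-2}\varphi[X_{\mathrm{free}}^p(B\otimes1)X_{\mathrm{free}}^k]\,A_i\,\varphi[X_{\mathrm{free}}^{q-2-k}]\,A_i . \end{align*}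
   Context: $(\mathcal A,\tau)$ is a $C^*$-probability space with faithful tracial state $\tau$ containing freely independent standard semicircular elements $s_1,\ldots,s_n$; $1$ is its unit. $\varphi=\mathrm{Id}\otimes\tau:M_d(\mathbb C)\otimes\mathcal A\to M_d(\mathbb C)$ is the partial trace, i.e. $\varphi[\sum_jM_j\otimes a_j]=\sum_j\tau(a_j)M_j$; $X^0=I\otimes1$. *)

(* Defs.v *)
From HB Require Import structures.
From mathcomp Require Import all_boot all_order all_algebra.
From mathcomp Require Import complex.
From mathcomp Require Import reals.
Set Implicit Arguments. Unset Strict Implicit. Unset Printing Implicit Defensive.
Import Order.TTheory GRing.Theory Num.Theory.
Local Open Scope ring_scope.

Definition peval (C : nzRingType) (A : lalgType C) (p : {poly C}) (x : A) : A :=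
  \sum_(i < size p) p`_i *: x ^+ i.

Definition catalan (m : nat) : nat := 'C(m.*2, m) %/ m.+1.

Definition star_prob_space (R : realType) (A : algType R[i])
  (star : A -> A) (tau : A -> R[i]) : Prop :=
  [/\ [/\ (forall a b : A, star (a + b) = star a + star b),
         (forall (c : R[i]) (a : A), star (c *: a) = c^* *: star a),
         (forall a b : A, star (a * b) = star b * star a)
       & (forall a : A, star (star a) = a)],
      [/\ (forall (a b : A) (c : R[i]), tau (c *: a + b) = c * tau a + tau b),
         tau 1 = 1
       & (forall a b : A, tau (a * b) = tau (b * a))],
      (forall a : A, 0 <= tau (star a * a))
    & (forall a : A, tau (star a * a) = 0 -> a = 0)].

Definition std_semicircular (R : realType) (A : algType R[i])
  (star : A -> A) (tau : A -> R[i]) (s : A) : Prop :=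
  [/\ star s = s,
      (forall m, tau (s ^+ m.*2) = (catalan m)%:R)
    & (forall m, tau (s ^+ m.*2.+1) = 0)].

(* Free independence of s_1, ..., s_n : the unital subalgebras generated by
   the s_i are free w.r.t. tau.  A word is a nonempty list of pairs
   (index, polynomial) with consecutive indices distinct. *)
Definition free_family (R : realType) (A : algType R[i]) (n : nat)
  (tau : A -> R[i]) (s : 'I_n -> A) : Prop :=
  forall l : seq ('I_n * {poly R[i]}),
    l != [::] ->
    sorted (fun u v => u.1 != v.1) l ->
    (forall u, u \in l -> tau (peval u.2 (s u.1)) = 0) ->
    tau (\prod_(u <- l) peval u.2 (s u.1)) = 0.

(* Elementary tensor M (x) a in M_d(C) (x) A, identified with M_d(A). *)
Definition tens (R : realType) (A : algType R[i]) (d : nat)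
  (M : 'M[R[i]]_d) (a : A) : 'M[A]_d :=
  map_mx (fun c => c *: a) M.

(* Partial trace phi = Id (x) tau : M_d(A) -> M_d(C), entrywise tau. *)
Definition ptr (R : realType) (A : algType R[i]) (d : nat)
  (tau : A -> R[i]) (X : 'M[A]_d) : 'M[R[i]]_d :=
  map_mx tau X.

Definition Xfree (R : realType) (A : algType R[i]) (d n : nat)
  (s : 'I_n -> A) (A0 : 'M[R[i]]_d) (Ai : 'I_n -> 'M[R[i]]_d) : 'M[A]_d :=
  tens A0 1 + \sum_(i < n) tens (Ai i) (s i).

(* Main.v *)
Require Import Defs.
From HB Require Import structures.
From mathcomp Require Import all_boot all_order all_algebra.
From mathcomp Require Import complex reals.
From mathcomp Require Import ring zify.
Set Implicit Arguments. Unset Strict Implicit. Unset Printing Implicit Defensive.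
Import Order.TTheory GRing.Theory Num.Theory.
Local Open Scope ring_scope.

Definition G (u k : nat) : int := ('C(u.*2 + k, u))%:Z - ('C(u.*2 + k, u + k + 1))%:Z.
Arguments G : simpl never.

Lemma G0k k : G 0 k = 1.
Proof. by rewrite /G double0 add0n bin0 bin_small //; lia. Qed.

Lemma GS0 u : G u.+1 0 = G u 1.
Proof.
rewrite /G.
have -> : (u.+1.*2 + 0 = (u.*2 + 1).+1)%N by rewrite doubleS; lia.
have -> : (u.+1 + 0 + 1 = u.+2)%N by lia.
have -> : (u + 1 + 1 = u.+2)%N by lia.
rewrite !binS !PoszD; ring.
Qed.

Lemma GSS u k : G u.+1 k.+1 = G u.+1 k + G u k.+2.
Proof.
rewrite /G.
have -> : (u.+1.*2 + k.+1 = (u.+1.*2 + k).+1)%N by lia.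
have -> : (u.*2 + k.+2 = u.+1.*2 + k)%N by rewrite doubleS; lia.
have -> : (u.+1 + k.+1 + 1 = (u.+1 + k + 1).+1)%N by lia.
have -> : (u + k.+2 + 1 = (u.+1 + k + 1).+1)%N by lia.
rewrite !binS !PoszD.
ring.
Qed.

Lemma catG m : (catalan m)%:Z = G m 0.
Proof.
rewrite /catalan /G addn0.
have h : (m.+1 * 'C(m.*2, m.+1) = m * 'C(m.*2, m))%N.
  by rewrite mul_bin_left -addnn addnK.
have e : ('C(m.*2, m) = m.+1 * ('C(m.*2, m) - 'C(m.*2, m.+1)))%N.
  by rewrite mulnBr h mulSn addnK.
rewrite [in X in (X %/ _)%N]e mulKn // addn1.
rewrite addn0 -subzn //.
by rewrite -(@leq_pmul2l m.+1) // h leq_mul2r leqnSn orbT.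
Qed.

Lemma Gconv_aux N : forall u k, (u.*2 + k < N)%N ->
  G u k.+1 = \sum_(a < u.+1) G a 0 * G (u - a) k.
Proof.
elim: N => [//|N IH] [|u] k hN.
  by rewrite big_ord1 /= sub0n !G0k mul1r.
rewrite big_ord_recr /= subnn G0k.
case: k hN => [|k] hN.
  rewrite GSS IH; last by rewrite doubleS in hN *; lia.
  rewrite mulr1 addrC; congr (_ + _); apply: eq_bigr => a _.
  by rewrite subSn ?GS0 // -ltnS.
rewrite GSS (IH u.+1 k); last by lia.
rewrite (IH u k.+2); last by rewrite doubleS in hN *; lia.
rewrite big_ord_recr /= subnn !G0k addrAC; congr (_ + _).
rewrite -big_split /=; apply: eq_bigr => a _.
have ha : (a <= u)%N by rewrite -ltnS.
by rewrite subSn // GSS -mulrDr.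
Qed.

Lemma catalan_rec m : (catalan m.+1)%:Z = \sum_(a < m.+1) (catalan a)%:Z * (catalan (m - a))%:Z.
Proof.
rewrite catG GS0 (@Gconv_aux (m.*2.+1)); last by rewrite addn0.
by apply: eq_bigr => a _; rewrite !catG.
Qed.

Lemma peval_horner (C : nzRingType) (A : algType C) (p : {poly C}) (x : A) :
  peval p x = horner_alg x p.
Proof.
rewrite /horner_alg /horner_morph /= (@horner_coef_wide _ (size p)); last first.
  by rewrite map_polyE (leq_trans (size_Poly _)) // size_map.
by apply: eq_bigr => k _; rewrite coef_map /= mulr_algl.
Qed.

Lemma peval_XnC (C : nzRingType) (A : algType C) (e : nat) (c : C) (x : A) :
  peval ('X^e - c%:P) x = x ^+ e - c *: 1.
Proof.
by rewrite peval_horner rmorphB /= rmorphXn /= horner_algX horner_algC.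
Qed.

Lemma sum_eo (R : comNzRingType) k (F : nat -> R) :
  \sum_(a < k.*2.+1) F a = \sum_(b < k.+1) F b.*2 + \sum_(b < k) F b.*2.+1.
Proof.
elim: k => [|k IH]; first by rewrite !big_ord1 big_ord0 addr0.
rewrite doubleS (big_ord_recr k.*2.+2) (big_ord_recr k.*2.+1) /= IH.
rewrite (big_ord_recr k.+1) [X in _ = _ + X](big_ord_recr k) /= -doubleS; ring.
Qed.

Lemma catalan_recR (R : nzRingType) m :
  (catalan m.+1)%:R = \sum_(a < m.+1) (catalan a)%:R * (catalan (m - a))%:R :> R.
Proof.
have h := congr1 (fun z : int => z%:~R : R) (catalan_rec m).
rewrite /= rmorph_sum /= in h.
rewrite (_ : (catalan m.+1)%:R = ((catalan m.+1 : int)%:~R)) // h.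
by apply: eq_bigr => a _; rewrite rmorphM.
Qed.

Section Scalar.
Variables (R : realType) (A : algType R[i]) (tau : A -> R[i]) (n : nat) (s : 'I_n -> A).
Hypothesis tauL : forall (a b : A) (c : R[i]), tau (c *: a + b) = c * tau a + tau b.
Hypothesis tau1 : tau 1 = 1.
Hypothesis semiE : forall j m, tau (s j ^+ m.*2) = (catalan m)%:R.
Hypothesis semiO : forall j m, tau (s j ^+ m.*2.+1) = 0.
Hypothesis free : free_family tau s.

Lemma tauD a b : tau (a + b) = tau a + tau b.
Proof. by have := tauL a b 1; rewrite scale1r mul1r. Qed.

Lemma tau0 : tau 0 = 0.
Proof. by have := tauD 0 0; rewrite addr0 => h; apply: (@addrI _ (tau 0)); rewrite addr0 -h. Qed.

Lemma tauZ c a : tau (c *: a) = c * tau a.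
Proof. by have := tauL a 0 c; rewrite addr0 tau0 addr0. Qed.

Lemma tauN a : tau (- a) = - tau a.
Proof. by rewrite -scaleN1r tauZ mulN1r. Qed.

Lemma tauB a b : tau (a - b) = tau a - tau b.
Proof. by rewrite tauD tauN. Qed.

Lemma tau_sum (I : Type) (r : seq I) (P : pred I) (F : I -> A) :
  tau (\sum_(k <- r | P k) F k) = \sum_(k <- r | P k) tau (F k).
Proof. exact: (big_morph tau tauD tau0). Qed.

Lemma tau_odd j e : odd e -> tau (s j ^+ e) = 0.
Proof. by move=> he; rewrite -(odd_double_half e) he add1n semiO. Qed.

Lemma sd1 j e : tau (s j ^+ e.+1) =
  \sum_(a < e) tau (s j ^+ a) * tau (s j ^+ (e.-1 - a)).
Proof.
have [he|he] := boolP (odd e).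
  rewrite -(odd_double_half e) he add1n /= -doubleS semiE catalan_recR.
  rewrite (sum_eo _ (fun a => tau (s j ^+ a) * tau (s j ^+ (e./2.*2 - a)))) [X in _ + X]big1 ?addr0; last first.
    by move=> b _; rewrite tau_odd ?mul0r //= odd_double.
  apply: eq_bigr => b _; rewrite !semiE.
  have -> : ((e./2).*2 - b.*2 = (e./2 - b).*2)%N by rewrite doubleB.
  by rewrite semiE.
rewrite -(odd_double_half e) (negbTE he) add0n semiO big1 // => a _.
have [ha|ha] := boolP (odd a); first by rewrite tau_odd ?mul0r.
rewrite [X in _ * X]tau_odd ?mulr0 //.
have hlt := ltn_ord a.
have -> : ((e./2.*2).-1 - a = e./2.*2 - a.+1)%N by lia.
by rewrite oddN ?odd_double //= ha.
Qed.


Definition item := ('I_n * nat * bool)%type.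
Definition ij (x : item) : 'I_n := x.1.1.
Definition ie (x : item) : nat := x.1.2.
Definition ic (x : item) : bool := x.2.
Definition mu j e := tau (s j ^+ e).
Definition val (x : item) : A :=
  s (ij x) ^+ ie x - (if ic x then mu (ij x) (ie x) else 0) *: 1.
Definition V (l : seq item) : A := \prod_(x <- l) val x.
Definition alt (l : seq item) := sorted (fun x y : item => ij x != ij y) l.

Lemma V_nil : V [::] = 1. Proof. by rewrite /V big_nil. Qed.
Lemma V_cons x l : V (x :: l) = val x * V l. Proof. by rewrite /V big_cons. Qed.
Lemma V_cat l1 l2 : V (l1 ++ l2) = V l1 * V l2. Proof. by rewrite /V big_cat. Qed.
Lemma V_rcons l x : V (rcons l x) = V l * val x.
Proof. by rewrite -cats1 V_cat V_cons V_nil mulr1. Qed.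

Lemma val_unc j e : val (j, e, false) = s j ^+ e.
Proof. by rewrite /val /= scale0r subr0. Qed.
Lemma val_c0 j : val (j, 0%N, true) = 0.
Proof. by rewrite /val /= /mu expr0 tau1 scale1r subrr. Qed.
Lemma val_tog j e : val (j, e, true) = (- mu j e) *: 1 + val (j, e, false).
Proof. by rewrite val_unc /val /= scaleNr addrC. Qed.

Lemma free_items l : l != [::] -> all ic l -> alt l -> tau (V l) = 0.
Proof.
move=> hne hc ha.
have -> : V l = \prod_(x <- l) peval ('X^(ie x) - (mu (ij x) (ie x))%:P) (s (ij x)).
  by rewrite /V; apply: eq_big_seq => x hx; rewrite peval_XnC /val (allP hc x hx).
have := free (l := map (fun x => (ij x, 'X^(ie x) - (mu (ij x) (ie x))%:P)) l).
rewrite big_map; move=> -> //.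
- by case: l hne {hc ha}.
- by rewrite sorted_map.
move=> u /mapP [x _ ->] /=.
by rewrite peval_XnC tauB tauZ tau1 mulr1 subrr.
Qed.

Variable i : 'I_n.

Definition Rx (x : item) (P Q : A) : R[i] :=
  if ij x == i then \sum_(a < ie x) tau (P * s i ^+ a) * tau (s i ^+ ((ie x).-1 - a) * Q)
  else 0.

Fixpoint Rg (P : A) (l : seq item) (Q : A) : R[i] :=
  if l is x :: l' then Rx x P (V l' * Q) + Rg (P * val x) l' Q else 0.

Definition D (l : seq item) := tau (V l * s i) - Rg 1 l 1.

Lemma Rg_cat P l1 l2 Q : Rg P (l1 ++ l2) Q = Rg P l1 (V l2 * Q) + Rg (P * V l1) l2 Q.
Proof.
elim: l1 P => [|x l1 IH] P /=; first by rewrite V_nil mulr1 add0r.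
by rewrite IH V_cat V_cons -!mulrA addrA.
Qed.

Lemma RxZl x c P P' Q : Rx x (c *: P + P') Q = c * Rx x P Q + Rx x P' Q.
Proof.
rewrite /Rx; case: ifP => _; last by rewrite mulr0 addr0.
rewrite big_distrr -big_split /=; apply: eq_bigr => a _.
by rewrite mulrDl -scalerAl tauL; ring.
Qed.

Lemma RxZr x c P Q Q' : Rx x P (c *: Q + Q') = c * Rx x P Q + Rx x P Q'.
Proof.
rewrite /Rx; case: ifP => _; last by rewrite mulr0 addr0.
rewrite big_distrr -big_split /=; apply: eq_bigr => a _.
by rewrite mulrDr -scalerAr tauL; ring.
Qed.

Lemma Rx0l x Q : Rx x 0 Q = 0.
Proof.
rewrite /Rx; case: ifP => // _; apply: big1 => a _.
by rewrite mul0r tau0 mul0r.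
Qed.

Lemma Rx0r x P : Rx x P 0 = 0.
Proof.
rewrite /Rx; case: ifP => // _; apply: big1 => a _.
by rewrite mulr0 tau0 mulr0.
Qed.

Lemma RgZl l c P P' Q : Rg (c *: P + P') l Q = c * Rg P l Q + Rg P' l Q.
Proof.
elim: l P P' => [|x l IH] P P' /=; first by rewrite mulr0 addr0.
by rewrite RxZl mulrDl -scalerAl IH; ring.
Qed.

Lemma RgZr l c P Q Q' : Rg P l (c *: Q + Q') = c * Rg P l Q + Rg P l Q'.
Proof.
elim: l P => [|x l IH] P /=; first by rewrite mulr0 addr0.
by rewrite mulrDr -scalerAr RxZr IH; ring.
Qed.

Lemma Rg0l l Q : Rg 0 l Q = 0.
Proof. by elim: l => [|x l IH] //=; rewrite Rx0l mul0r IH addr0. Qed.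

Lemma Rg0r l P : Rg P l 0 = 0.
Proof. by elim: l P => [|x l IH] P //=; rewrite mulr0 Rx0r IH addr0. Qed.

Definition Lam pre post (y : A) :=
  tau (V pre * y * V post * s i) - Rg 1 pre (y * V post) - Rg (V pre * y) post 1.

Lemma D_pos pre x post :
  D (pre ++ x :: post) = Lam pre post (val x) - Rx x (V pre) (V post).
Proof.
rewrite /D /Lam Rg_cat V_cat V_cons /= !mulr1 !mul1r !mulrA; ring.
Qed.

Lemma D_rem pre post : D (pre ++ post) = Lam pre post 1.
Proof. by rewrite /D /Lam Rg_cat V_cat !mulr1 !mul1r; ring. Qed.

Lemma Lam_lin pre post c y z :
  Lam pre post (c *: y + z) = c * Lam pre post y + Lam pre post z.
Proof.
have e1 : V pre * (c *: y + z) * V post * s i =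
    c *: (V pre * y * V post * s i) + V pre * z * V post * s i.
  by rewrite mulrDr !mulrDl -scalerAr -!scalerAl.
have e2 : (c *: y + z) * V post = c *: (y * V post) + z * V post.
  by rewrite mulrDl -scalerAl.
have e3 : V pre * (c *: y + z) = c *: (V pre * y) + V pre * z.
  by rewrite mulrDr -scalerAr.
rewrite /Lam e1 e2 e3 tauL RgZr RgZl; ring.
Qed.

Lemma Lam0 pre post : Lam pre post 0 = 0.
Proof. by rewrite /Lam !mulr0 !mul0r tau0 Rg0r Rg0l !subr0. Qed.

Lemma Rx_e0 j c P Q : Rx (j, 0%N, c) P Q = 0.
Proof. by rewrite /Rx; case: ifP => // _; rewrite big_ord0. Qed.

Lemma D_unc0 pre j post : D (pre ++ (j, 0%N, false) :: post) = D (pre ++ post).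
Proof. by rewrite D_pos D_rem Rx_e0 subr0 val_unc expr0. Qed.

Lemma D_c0 pre j post : D (pre ++ (j, 0%N, true) :: post) = 0.
Proof. by rewrite D_pos val_c0 Lam0 Rx_e0 subr0. Qed.

Lemma D_tog pre j e post :
  D (pre ++ (j, e, true) :: post) =
  D (pre ++ (j, e, false) :: post) - mu j e * D (pre ++ post).
Proof.
rewrite !D_pos D_rem val_tog Lam_lin.
have -> : Rx (j, e, true) (V pre) (V post) = Rx (j, e, false) (V pre) (V post) by [].
ring.
Qed.

Lemma Rx_merge j e f c c' c'' P Q :
  Rx (j, e, c) P (s j ^+ f * Q) + Rx (j, f, c') (P * s j ^+ e) Q = Rx (j, (e + f)%N, c'') P Q.
Proof.
rewrite /Rx /ij /ie /=; case: eqP => [->|_]; last by rewrite addr0.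
rewrite big_split_ord /=; congr (_ + _); apply: eq_bigr => a _ /=.
  by rewrite mulrA -exprD; congr (_ * tau (_ ^+ _ * _)); have := ltn_ord a; lia.
by rewrite -mulrA -exprD; congr (_ * tau (_ ^+ _ * _)); have := ltn_ord a; lia.
Qed.

Lemma D_merge pre j e f post :
  D (pre ++ (j, e, false) :: (j, f, false) :: post) = D (pre ++ (j, (e + f)%N, false) :: post).
Proof.
rewrite !D_pos /Lam /= !val_unc !V_cons val_unc !mulr1 exprD.
rewrite -(Rx_merge j e f false false false (V pre) (V post)).
rewrite !mulrA; ring.
Qed.


Lemma alt_rcons_eq pre x y : ij x = ij y -> alt (rcons pre x) = alt (rcons pre y).
Proof. by case: pre => [//|p0 p] h; rewrite /alt /= !rcons_path h. Qed.

Lemma alt_cons_eq l x y : ij x = ij y -> alt (x :: l) = alt (y :: l).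
Proof. by case: l => [//|p0 p] h; rewrite /alt /= h. Qed.

Lemma alt_rcons2 l x y : alt (rcons l x) -> ij y != ij x -> alt (rcons (rcons l x) y).
Proof.
case: l => [|p0 p] /=; first by rewrite /alt /= eq_sym => _ ->.
rewrite /alt /= !rcons_path last_rcons => -> /=.
by rewrite eq_sym.
Qed.

Lemma alt_catl l1 l2 : alt (l1 ++ l2) -> alt l1.
Proof. by move/cat_sorted2 => []. Qed.

Lemma alt_catr l1 l2 : alt (l1 ++ l2) -> alt l2.
Proof. by move/cat_sorted2 => []. Qed.

Lemma mu1 j : mu j 1 = 0.
Proof. by rewrite /mu -[1%N]/(0.*2.+1)%N semiO. Qed.

Lemma val_s1 j : val (j, 1%N, true) = s j.
Proof. by rewrite /val /= mu1 scale0r subr0 expr1. Qed.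

Lemma tau_Vpow pre a : pre != [::] -> all ic pre -> alt (rcons pre (i, a, true)) ->
  tau (V pre * s i ^+ a) = 0.
Proof.
move=> hne hc ha.
have -> : V pre * s i ^+ a = V (rcons pre (i, a, true)) + mu i a *: V pre.
  by rewrite V_rcons /val /= mulrBr -scalerAr mulr1 subrK.
rewrite tauD tauZ !free_items ?mulr0 ?addr0 //.
- by rewrite -cats1 in ha; apply: alt_catl ha.
- by case: pre hne {hc ha}.
- by rewrite all_rcons hc.
Qed.

Lemma tau_powV l a : l != [::] -> all ic l -> alt ((i, a, true) :: l) ->
  tau (s i ^+ a * V l) = 0.
Proof.
move=> hne hc ha.
have -> : s i ^+ a * V l = V ((i, a, true) :: l) + mu i a *: V l.
  by rewrite V_cons /val /= mulrBl -scalerAl mul1r subrK.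
rewrite tauD tauZ !free_items ?mulr0 ?addr0 //.
- exact: path_sorted ha.
Qed.

Lemma Rx_vl pre x Q : pre != [::] -> all ic (rcons pre x) -> alt (rcons pre x) ->
  Rx x (V pre) Q = 0.
Proof.
move=> hne hc ha; rewrite /Rx; case: eqP => // hx; apply: big1 => a _.
rewrite tau_Vpow ?mul0r //.
- by move: hc; rewrite all_rcons => /andP [].
- by rewrite -(alt_rcons_eq _ (x := x)).
Qed.

Lemma Rx_vr x l P : l != [::] -> all ic (x :: l) -> alt (x :: l) ->
  Rx x P (V l) = 0.
Proof.
move=> hne hc ha; rewrite /Rx; case: eqP => // hx; apply: big1 => a _.
rewrite tau_powV ?mulr0 //.
- by move: hc => /andP [].
- by rewrite -(alt_cons_eq _ (x := x)).
Qed.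

Lemma Rg_vanish l pre : pre != [::] -> all ic (pre ++ l) -> alt (pre ++ l) ->
  Rg (V pre) l 1 = 0.
Proof.
elim: l pre => [//|x l IH] pre hne hc ha /=.
rewrite -cat_rcons in hc ha.
rewrite Rx_vl //; last first.
- exact: alt_catl ha.
- by move: hc; rewrite all_cat => /andP [].
rewrite -V_rcons IH ?addr0 //.
by case: pre {hne hc ha}.
Qed.

Lemma D_P2 l : all ic l -> alt l -> D l = 0.
Proof.
case: l => [|x l] hc ha.
  by rewrite /D V_nil mul1r /= subr0 -[s i]expr1 -[1%N]/(0.*2.+1)%N semiO.
have hRg : Rg 1 (x :: l) 1 = Rx x 1 (V l).
  have hx : val x = V [:: x] by rewrite V_cons V_nil mulr1.
  by rewrite /= mul1r mulr1 hx Rg_vanish ?addr0.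
case: l hc ha hRg => [|y l] hc ha hRg.
  rewrite /D hRg V_cons V_nil mulr1.
  case: x hc ha hRg => [[j e] c] /=; rewrite andbT => hc ha _; rewrite /ic /= in hc.
  rewrite hc.
  have [hji|hji] := eqVneq j i.
    subst j; rewrite /Rx /= eqxx /val /= mulrBl -exprSr -scalerAl mul1r tauB tauZ.
    rewrite -[tau (s i)]/(mu i 1) mu1 mulr0 subr0 -/(mu i e.+1) /mu sd1.
    by apply/eqP; rewrite subr_eq0; apply/eqP/eq_bigr => a _; rewrite mul1r mulr1.
  rewrite /Rx /= (negbTE hji) subr0 -(val_s1 i).
  rewrite (_ : _ * _ = V [:: (j, e, true); (i, 1%N, true)]); last first.
    by rewrite !V_cons V_nil mulr1.
  by apply: free_items => //=; rewrite /alt /= andbT /ij /=.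
rewrite /D hRg Rx_vr // subr0.
set l' := x :: y :: l.
have : l' != [::] by [].
have : (size l' > 1)%N by [].
move: hc ha; rewrite -/l'.
case/lastP: l' => [//|l0 z] hc ha hsz _.
have hl0 : l0 != [::] by case: l0 hsz {hc ha}.
have hc0 : all ic l0 by move: hc; rewrite all_rcons => /andP [].
rewrite V_rcons -mulrA.
have [hzi|hzi] := eqVneq (ij z) i; last first.
  rewrite -(val_s1 i) mulrA -V_rcons -V_rcons free_items //.
  - by rewrite -size_eq0 size_rcons.
  - by rewrite all_rcons hc.
  - by apply: alt_rcons2 => //; rewrite eq_sym.
case: z hzi hc ha hsz => [[j e] c] /= hzi hc ha hsz; rewrite /ij /= in hzi; subst j.
have hcz : c by move: hc; rewrite all_rcons => /andP [].
rewrite hcz.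
have -> : val (i, e, true) * s i =
    val (i, e.+1, true) + mu i e.+1 *: 1 - mu i e *: val (i, 1%N, true).
  by rewrite val_s1 /val /= mulrBl -exprSr -scalerAl mul1r; rewrite subrK.
rewrite mulrBr mulrDr -!scalerAr mulr1 tauB tauD !tauZ -!V_rcons.
rewrite !free_items ?mulr0 ?subr0 ?addr0 //.
- by rewrite -size_eq0 size_rcons.
- by rewrite all_rcons hc0.
- by rewrite (alt_rcons_eq _ (y := (i, e, c))).
- by rewrite -cats1 in ha; apply: alt_catl ha.
- by rewrite -size_eq0 size_rcons.
- by rewrite all_rcons hc0.
- by rewrite (alt_rcons_eq _ (y := (i, e, c))).
Qed.


Definition msr (l : seq item) : nat := \sum_(x <- l) (ie x).+1.

Lemma msr_cat l1 l2 : msr (l1 ++ l2) = (msr l1 + msr l2)%N.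
Proof. by rewrite /msr big_cat. Qed.

Lemma msr_cons x l : msr (x :: l) = ((ie x).+1 + msr l)%N.
Proof. by rewrite /msr big_cons. Qed.

Lemma ex_has (p : pred item) l : has p l ->
  exists pre x post, l = pre ++ x :: post /\ p x.
Proof.
elim: l => [//|a l IH] /= /orP [ha|/IH [pre [x [post [-> hx]]]]].
  by exists [::], a, l.
by exists (a :: pre), x, post.
Qed.

Lemma ex_nalt l : ~~ alt l ->
  exists pre x y post, l = pre ++ x :: y :: post /\ ij x = ij y.
Proof.
elim: l => [//|a l IH]; case: l IH => [//|b l] IH.
rewrite /alt /= negb_and => /orP [/negPn/eqP h|h].
  by exists [::], a, b, l.
have [pre [x [y [post [e hxy]]]]] := IH h.
by exists (a :: pre), x, y, post; rewrite e.
Qed.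

Lemma D_tog2 pre j e c c' post :
  (forall l', (msr l' < msr (pre ++ (j, e, c) :: post))%N -> D l' = 0) ->
  D (pre ++ (j, e, c) :: post) = D (pre ++ (j, e, c') :: post).
Proof.
move=> IH.
have h0 : D (pre ++ post) = 0.
  by apply: IH; rewrite !msr_cat msr_cons; lia.
have h : forall c0, D (pre ++ (j, e, c0) :: post) = D (pre ++ (j, e, false) :: post).
  by case => //; rewrite D_tog h0 mulr0 subr0.
by rewrite !h.
Qed.

Definition cen (x : item) : item := (ij x, ie x, true).

Lemma D_center K : (forall l', (msr l' < K)%N -> D l' = 0) ->
  forall post pre, msr (pre ++ post) = K -> D (pre ++ post) = D (pre ++ map cen post).
Proof.
move=> IH; elim=> [//|[[j e] c] post IHp] pre hK /=.
rewrite (@D_tog2 pre j e c true post); last by rewrite hK.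
rewrite -cat_rcons IHp ?cat_rcons //.
by move: hK; rewrite !msr_cat !msr_cons.
Qed.

Lemma D_all l : D l = 0.
Proof.
suff: forall K l, (msr l < K)%N -> D l = 0 by move=> /(_ (msr l).+1 l); apply.
elim=> [//|K IHK] {}l hl.
have IH : forall l', (msr l' < msr l)%N -> D l' = 0.
  by move=> l' h; apply: IHK; lia.
have [hz|hnz] := boolP (has (fun x : item => ie x == 0%N) l).
  have [pre [[[j e] c] [post [hl0 /eqP he]]]] := ex_has hz.
  rewrite /ie /= in he; subst l e.
  clear hz; case: c IH hl => IH hl; first by rewrite D_c0.
  by rewrite D_unc0 IH // !msr_cat msr_cons; lia.
have [ha|hna] := boolP (alt l).
  rewrite -[l]cat0s (D_center IH) //= D_P2 //.
    by apply/allP => x /mapP [y _ ->].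
  by rewrite /alt sorted_map.
have [pre [[[j e] c] [[[j' f] c'] [post [hl0 hjj]]]]] := ex_nalt hna.
rewrite /ij /= in hjj; subst l j'.
rewrite (@D_tog2 pre j e c false) //.
rewrite -cat_rcons (@D_tog2 _ j f c' false); last first.
  by move=> l'; rewrite cat_rcons => h; apply: IH; move: h; rewrite !msr_cat !msr_cons.
rewrite cat_rcons D_merge IH // !msr_cat !msr_cons /ie /=; lia.
Qed.

Definition ev (w : seq 'I_n) : A := \prod_(j <- w) s j.

Definition wit (w : seq 'I_n) : seq item := map (fun j => (j, 1%N, false)) w.

Lemma V_wit w : V (wit w) = ev w.
Proof. by rewrite /V /ev big_map; apply: eq_bigr => j _; rewrite val_unc expr1. Qed.

Lemma Rg_wit P w Q : Rg P (wit w) Q =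
  \sum_(0 <= t < size w)
    (if nth i w t == i then tau (P * ev (take t w)) * tau (ev (drop t.+1 w) * Q) else 0).
Proof.
elim: w P => [|j w IH] P /=; first by rewrite big_geq.
rewrite big_nat_recl // IH V_wit val_unc expr1 /Rx /ij /ie /= drop0.
congr (_ + _).
  case: eqP => // _; rewrite big_ord1 /= expr0 /ev big_nil !mulr1 mul1r.
  by [].
apply: eq_bigr => t _; rewrite /ev big_cons mulrA.
by [].
Qed.

Lemma sd_words w : tau (ev w * s i) =
  \sum_(0 <= t < size w)
    (if nth i w t == i then tau (ev (take t w)) * tau (ev (drop t.+1 w)) else 0).
Proof.
have := D_all (wit w); rewrite /D V_wit Rg_wit => /eqP; rewrite subr_eq0 => /eqP ->.
by apply: eq_bigr => t _; rewrite mul1r mulr1.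
Qed.

End Scalar.

Section Matrix.
Variables (R : realType) (A : algType R[i]) (tau : A -> R[i]) (n d : nat) (s : 'I_n -> A).
Hypothesis tauL : forall (a b : A) (c : R[i]), tau (c *: a + b) = c * tau a + tau b.
Hypothesis tau1 : tau 1 = 1.
Hypothesis semiE : forall j m, tau (s j ^+ m.*2) = (catalan m)%:R.
Hypothesis semiO : forall j m, tau (s j ^+ m.*2.+1) = 0.
Hypothesis free : free_family tau s.

Notation tns := (@tens R A d).
Notation PT := (@ptr R A d tau).

Lemma tensM (M N : 'M[R[i]]_d) (a b : A) : tns M a * tns N b = tns (M *m N) (a * b).
Proof.
apply/matrixP => x y; rewrite /tens -mulmxE !mxE scaler_suml.
by apply: eq_bigr => z _; rewrite !mxE -scalerAl -scalerAr scalerA.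
Qed.

Lemma tens0 (a : A) : tns 0 a = 0.
Proof. by apply/matrixP => x y; rewrite !mxE scale0r. Qed.

Lemma tens1 : tns 1%:M 1 = 1.
Proof.
apply/matrixP => x y; rewrite !mxE.
by case: eqP => _ /=; rewrite ?scale1r ?scale0r.
Qed.

Lemma ptrD (X Y : 'M[A]_d) : PT (X + Y) = PT X + PT Y.
Proof. by apply/matrixP => x y; rewrite !mxE (tauD tauL). Qed.

Lemma ptr0 : PT 0 = 0.
Proof. by apply/matrixP => x y; rewrite !mxE (tau0 tauL). Qed.

Lemma ptr_sum (I : Type) (r : seq I) (P : pred I) (F : I -> 'M[A]_d) :
  PT (\sum_(k <- r | P k) F k) = \sum_(k <- r | P k) PT (F k).
Proof. exact: (big_morph PT ptrD ptr0). Qed.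

Lemma ptr_tens M a : PT (tns M a) = tau a *: M.
Proof. by apply/matrixP => x y; rewrite !mxE (tauZ tauL) mulrC. Qed.

Lemma ptr_tensr (P : 'M[A]_d) M : PT (P * tns M 1) = PT P *m M.
Proof.
apply/matrixP => x y; rewrite /ptr /tens -mulmxE !mxE (tau_sum tauL).
by apply: eq_bigr => z _; rewrite !mxE -scalerAr mulr1 (tauZ tauL) mulrC.
Qed.

Lemma ptr_tensl (P : 'M[A]_d) M : PT (tns M 1 * P) = M *m PT P.
Proof.
apply/matrixP => x y; rewrite /ptr /tens -mulmxE !mxE (tau_sum tauL).
by apply: eq_bigr => z _; rewrite !mxE -scalerAl mul1r (tauZ tauL).
Qed.


Lemma take_rcons_le (T : Type) (w : seq T) j t : (t <= size w)%N -> take t (rcons w j) = take t w.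
Proof.
move=> h; rewrite -cats1 take_cat; case: ltnP => // h2.
have -> : t = size w by lia.
by rewrite subnn take0 cats0 take_size.
Qed.

Definition Fm (m : option 'I_n -> 'M[R[i]]_d) : 'M[A]_d :=
  tns (m None) 1 + \sum_(j < n) tns (m (Some j)) (s j).
Definition Gp (Ms : seq (option 'I_n -> 'M[R[i]]_d)) : 'M[A]_d := \prod_(m <- Ms) Fm m.

Lemma Gp_nil : Gp [::] = 1. Proof. by rewrite /Gp big_nil. Qed.
Lemma Gp_cons m Ms : Gp (m :: Ms) = Fm m * Gp Ms. Proof. by rewrite /Gp big_cons. Qed.

Lemma ev_nil : ev s [::] = 1. Proof. by rewrite /ev big_nil. Qed.
Lemma ev_rcons w j : ev s (rcons w j) = ev s w * s j.
Proof. by rewrite /ev -cats1 big_cat big_seq1. Qed.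

Lemma expand M w m : tns M (ev s w) * Fm m =
  tns (M *m m None) (ev s w) + \sum_(j < n) tns (M *m m (Some j)) (ev s (rcons w j)).
Proof.
rewrite /Fm mulrDr tensM mulr1 mulr_sumr; congr (_ + _).
by apply: eq_bigr => j _; rewrite tensM ev_rcons.
Qed.

Lemma expand_ptr M w m Y :
  PT (tns (M *m m None) (ev s w) * Y) +
  \sum_(j < n) PT (tns (M *m m (Some j)) (ev s (rcons w j)) * Y) =
  PT (tns M (ev s w) * Fm m * Y).
Proof. by rewrite expand mulrDl mulr_suml ptrD ptr_sum. Qed.

Variables (i : 'I_n) (N : 'M[R[i]]_d).
Definition m0 : option 'I_n -> 'M[R[i]]_d := fun _ => 0.

Definition S1 M w Ms :=
  \sum_(0 <= t < size w) (if nth i w t == i then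
     tau (ev s (take t w)) *: (PT (tns M (ev s (drop t.+1 w)) * Gp Ms) *m N) else 0).
Definition S2 M w Ms :=
  \sum_(0 <= r < size Ms)
     PT (tns M (ev s w) * Gp (take r Ms)) *m nth m0 Ms r (Some i) *m PT (Gp (drop r.+1 Ms)) *m N.

Lemma L_S1 M w m Ms :
  S1 (M *m m None) w Ms + \sum_(j < n) S1 (M *m m (Some j)) (rcons w j) Ms =
  S1 M w (m :: Ms) + tau (ev s w) *: (M *m m (Some i) *m PT (Gp Ms) *m N).
Proof.
rewrite /S1 addrC.
under eq_bigr => j _ do rewrite size_rcons big_nat_recr //=.
rewrite big_split /= addrAC [X in X + _ = _]addrC; congr (_ + _); last first.
  rewrite (bigD1 i) //= big1 ?addr0; last first.
    move=> j hj; rewrite nth_rcons ltnn eqxx (negbTE hj) //.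
  rewrite nth_rcons ltnn !eqxx -cats1 take_size_cat // drop_oversize; last first.
    by rewrite size_cat /= addn1.
  by rewrite ev_nil ptr_tensl.
rewrite exchange_big /= -big_split /=.
apply: eq_big_nat => t /andP [_ ht].
have ht' := ltnW ht.
under eq_bigr => j _ do rewrite nth_rcons ht take_rcons_le // drop_rcons //.
case: ifP => _; last by rewrite big1 ?addr0.
rewrite -scaler_sumr -scalerDr; congr (_ *: _).
by rewrite -mulmx_suml -mulmxDl expand_ptr Gp_cons mulrA.
Qed.

Lemma L_S2 M w m Ms :
  S2 (M *m m None) w Ms + \sum_(j < n) S2 (M *m m (Some j)) (rcons w j) Ms +
  tau (ev s w) *: (M *m m (Some i) *m PT (Gp Ms) *m N) = S2 M w (m :: Ms).
Proof.
rewrite /S2 /= big_nat_recl //= Gp_nil mulr1 ptr_tens -!scalemxAl addrC.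
congr (_ + _); first by rewrite drop0.
rewrite exchange_big /= -big_split /=; apply: eq_bigr => r _.
rewrite Gp_cons mulrA -expand_ptr.
by rewrite !mulmxDl !mulmx_suml.
Qed.

Lemma Gen Ms M w :
  PT (tns M (ev s w) * Gp Ms * tns N (s i)) = S1 M w Ms + S2 M w Ms.
Proof.
elim: Ms M w => [|m Ms IH] M w.
  rewrite Gp_nil mulr1 tensM ptr_tens (sd_words tauL tau1 semiE semiO free).
  have -> : S2 M w [::] = 0 by rewrite /S2 big_geq.
  rewrite addr0 /S1 scaler_suml; apply: eq_bigr => t _.
  case: ifP => _; last by rewrite scale0r.
  by rewrite Gp_nil mulr1 ptr_tens -scalerA scalemxAl.
rewrite Gp_cons mulrA -(mulrA _ (Gp Ms)) -expand_ptr.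
rewrite !mulrA IH.
under eq_bigr => j _ do rewrite mulrA IH.
rewrite big_split /= addrACA L_S1 -L_S2.
by rewrite -!addrA; congr (_ + _); rewrite addrC -!addrA.
Qed.

End Matrix.

Lemma take_nc (T : Type) (x : T) l k p : (k <= p)%N -> take k (nseq p x ++ l) = nseq k x.
Proof.
move=> h; rewrite take_cat size_nseq; case: ltnP => h2; first by rewrite take_nseq // ltnW.
have -> : k = p by lia.
by rewrite subnn take0 cats0.
Qed.

Lemma drop_nc (T : Type) (x : T) l k p : (k <= p)%N -> drop k (nseq p x ++ l) = nseq (p - k) x ++ l.
Proof.
move=> h; rewrite drop_cat size_nseq; case: ltnP => h2; first by rewrite drop_nseq.
have -> : k = p by lia.
by rewrite subnn drop0.
Qed.

Lemma nth_nc (T : Type) (d x : T) l k p : (k < p)%N -> nth d (nseq p x ++ l) k = x.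
Proof. by move=> h; rewrite nth_cat size_nseq h nth_nseq h. Qed.

Lemma take_nc2 (T : Type) (x : T) l k p : take (p + k) (nseq p x ++ l) = nseq p x ++ take k l.
Proof. by rewrite take_cat size_nseq ltnNge leq_addr /= addKn. Qed.

Lemma drop_nc2 (T : Type) (x : T) l k p : drop (p + k) (nseq p x ++ l) = drop k l.
Proof. by rewrite drop_cat size_nseq ltnNge leq_addr /= addKn. Qed.

Lemma nth_nc2 (T : Type) (d x : T) l k p : nth d (nseq p x ++ l) (p + k) = nth d l k.
Proof. by rewrite nth_cat size_nseq ltnNge leq_addr /= addKn. Qed.

Lemma big_shift (T : Type) (idx : T) (op : T -> T -> T) p q (F : nat -> T) :
  \big[op/idx]_(p <= r < (p + q)%N) F r = \big[op/idx]_(0 <= k < q) F (p + k)%N.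
Proof.
rewrite -{1}[p]add0n big_addn addKn; apply: eq_bigr => k _.
by rewrite addnC.
Qed.

Unset Implicit Arguments.

Theorem lemma6p1 (R : realType) (A : algType R[i]) (star : A -> A)
  (tau : A -> R[i]) (n d : nat) (s : 'I_n -> A)
  (A0 : 'M[R[i]]_d) (Ai : 'I_n -> 'M[R[i]]_d) :
  star_prob_space star tau ->
  (forall i, std_semicircular star tau (s i)) ->
  free_family tau s ->
  let X := Xfree s A0 Ai in
  let phi := ptr tau in
  (forall p : nat, (2 <= p)%N ->
     phi (X ^+ p) =
       phi (X ^+ p.-1) *m A0
       + \sum_(i < n) \sum_(k < p.-1)
           phi (X ^+ k) *m Ai i *m phi (X ^+ (p - 2 - k)) *m Ai i)
  /\
  (forall (B : 'M[R[i]]_d) (p q : nat), (1 <= p)%N -> (1 <= q)%N ->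
     phi (X ^+ p * tens B 1 * X ^+ q) =
       phi (X ^+ p * tens B 1 * X ^+ q.-1) *m A0
       + \sum_(i < n) \sum_(k < p)
           phi (X ^+ k) *m Ai i *m phi (X ^+ (p - 1 - k) * tens B 1 * X ^+ q.-1) *m Ai i
       + (if (2 <= q)%N then
            \sum_(i < n) \sum_(k < q.-1)
              phi (X ^+ p * tens B 1 * X ^+ k) *m Ai i *m phi (X ^+ (q - 2 - k)) *m Ai i
          else 0)).
Proof.
move=> hsp hsc hfree X phi.
case: hsp => _ [tauL tau1 _] _ _.
have semiE : forall j m, tau (s j ^+ m.*2) = (catalan m)%:R.
  by move=> j m; case: (hsc j).
have semiO : forall j m, tau (s j ^+ m.*2.+1) = 0.
  by move=> j m; case: (hsc j).
pose mX : option 'I_n -> 'M[R[i]]_d := fun o => if o is Some j then Ai j else A0.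
pose mB (B : 'M[R[i]]_d) : option 'I_n -> 'M[R[i]]_d := fun o => if o is Some _ then 0 else B.
have hX : X = Fm s mX by [].
have hXp : forall p, X ^+ p = Gp s (nseq p mX).
  by elim=> [|p IH]; rewrite ?Gp_nil // exprS IH /= Gp_cons.
have hB : forall B, tens B 1 = Fm s (mB B).
  by move=> B; rewrite /Fm big1 ?addr0 // => j _; rewrite tens0.
have hPX : forall P, phi (P * X) =
    phi P *m A0 + \sum_(i < n) phi (P * tens (Ai i) (s i)).
  by move=> P; rewrite /phi /X /Xfree mulrDr (ptrD tauL) (ptr_tensr tauL) mulr_sumr (ptr_sum tauL).
have hG : forall i Ms, phi (Gp s Ms * tens (Ai i) (s i)) =
    \sum_(0 <= r < size Ms) phi (Gp s (take r Ms)) *m nth (m0 R d) Ms r (Some i)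
       *m phi (Gp s (drop r.+1 Ms)) *m Ai i.
  move=> i Ms.
  have := Gen tauL tau1 semiE semiO hfree i (Ai i) Ms 1%:M [::].
  rewrite /phi ev_nil tens1 mul1r => ->.
  have -> : S1 tau s i (Ai i) 1%:M [::] Ms = 0 by rewrite /S1 big_geq.
  rewrite add0r /S2; apply: eq_bigr => r _.
  by rewrite ev_nil tens1 mul1r.
split.
  case=> [//|p] hp; rewrite exprSr hPX /=; congr (_ + _).
  apply: eq_bigr => i _; rewrite hXp hG size_nseq big_mkord.
  apply: eq_bigr => k _.
  rewrite take_nseq; last exact: ltnW.
  rewrite drop_nseq nth_nseq ltn_ord /= !hXp.
  by have -> : (p.+1 - 2 - k = p - k.+1)%N by lia.
move=> B p q hp hq.
case: q hq => [//|q] _.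
rewrite exprSr mulrA hPX /= -addrA; congr (_ + _).
have -> : (if (2 <= q.+1)%N then
      \sum_(i < n) \sum_(k < q)
        phi (X ^+ p * tens B 1 * X ^+ k) *m Ai i *m phi (X ^+ (q.+1 - 2 - k)) *m Ai i
    else 0) = \sum_(i < n) \sum_(k < q)
        phi (X ^+ p * tens B 1 * X ^+ k) *m Ai i *m phi (X ^+ (q.+1 - 2 - k)) *m Ai i.
  by case: q => [|q] //=; rewrite big1 // => i _; rewrite big_ord0.
rewrite -big_split /=; apply: eq_bigr => i _.
set Ms := nseq p mX ++ mB B :: nseq q mX.
have hGp : forall a b, Gp s (nseq a mX ++ mB B :: nseq b mX) = X ^+ a * tens B 1 * X ^+ b.
  by move=> a b; rewrite !hXp hB /Gp big_cat /= big_cons mulrA.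
rewrite -hGp -/Ms hG /Ms size_cat size_nseq /= addnS.
rewrite (big_cat_nat _ (n := p)) //=; last by lia.
rewrite big_nat_recl /=; last by lia.
have hnp : nth (m0 R d) (nseq p mX ++ mB B :: nseq q mX) p = mB B.
  by rewrite nth_cat size_nseq ltnn subnn.
rewrite hnp /= mulmx0 !mul0mx add0r size_nseq big_shift.
congr (_ + _).
  rewrite big_mkord; apply: eq_bigr => k _.
  rewrite take_nc; last exact: ltnW.
  rewrite (@drop_nc _ _ _ k.+1 p (ltn_ord k)) (@nth_nc _ _ _ _ k p (ltn_ord k)) /=.
  rewrite hGp -hXp.
  by have -> : (p - k.+1 = p - 1 - k)%N by lia.
rewrite big_mkord; apply: eq_bigr => k _.
have e1 : ((p + k).+1 = p + k.+1)%N by lia.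
have e2 : ((p + k).+2 = p + k.+2)%N by lia.
rewrite e2 e1 take_nc2 drop_nc2 nth_nc2 /=.
rewrite take_nseq; last exact: ltnW.
rewrite nth_nseq ltn_ord /= drop_nseq hGp -hXp.
by have -> : (q.+1 - 2 - k = q - k.+1)%N by lia.
Qed.
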